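(* For every $\eta\in(0,1]$ and $b\in\mathbb{N}$ there exists $a_0$ such that for every integer $a\ge a_0$ there exists $\nu_0>0$ such that for every $\nu\in(0,\nu_0]$ there exists $\mu_0>0$ such that for every $\mu\in(0,\mu_0]$ there exists $n_0$ such that for all $n\ge n_0$ the following holds. Let $m\in\mathbb{N}$ and let $C_1,\dots,C_m$ be finite multisets of elements of $\mathbb{N}$ such that (S1) $\nu n\le |C_i|\le n$ for every $i\in[m]$; (S2) $\sum_{i=1}^m \mathrm{mult}(t,C_i)\le \mu n$ for every $t\in\mathbb{N}$. Let $\ell\in\mathbb{N}$ and let $U_1,\dots,U_\ell\subseteq\mathbb{N}$ be pairwise disjoint sets with $|U_k|=a$ for all $k$, and $U=\bigcup_{k=1}^\ell U_k$. Then there exists $T\subseteq U$ such that (T1) $|T\cap U_k|\ge b$ for every $k\in[\ell]$; (T2) $|C_i\setminus^+ T|\ge (1-\eta)|C_i|$ for every $i\in[m]$.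
   Context: For a multiset $C$ and $t\in\mathbb{N}$, $\mathrm{mult}(t,C)$ is the multiplicity of $t$ in $C$; $|C|$ is the size counted with multiplicity. For a set $T$, $C\setminus^+T$ is the multiset obtained from $C$ by removing all copies of all elements of $T$. *)

(* Defs.v *)
From HB Require Import structures.
From mathcomp Require Import all_boot all_order all_algebra.
Set Implicit Arguments. Unset Strict Implicit. Unset Printing Implicit Defensive.

(* Finite multisets of naturals are represented by sequences [seq nat]
   (order irrelevant). |C| is [size C]. *)

Definition mult (t : nat) (C : seq nat) : nat := count_mem t C.

Definition msetminus (C : seq nat) (T : pred nat) : seq nat :=
  [seq x <- C | ~~ T x].

(* Main.v *)
Require Import Defs.
From HB Require Import structures.
From mathcomp Require Import all_boot all_order all_algebra.
From mathcomp Require Import ring lra zify.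
Import Order.TTheory GRing.Theory Num.Theory.
Local Open Scope ring_scope.
Set Implicit Arguments. Unset Strict Implicit. Unset Printing Implicit Defensive.

Lemma kernel_exists (R : fieldType) (r : nat) (F : seq nat) (L : nat -> nat -> R) :
  uniq F -> (r < size F)%N ->
  exists y : nat -> R, (forall t, t \notin F -> y t = 0) /\
    (exists2 t, t \in F & y t != 0) /\
    (forall j, (j < r)%N -> \sum_(t <- F) L j t * y t = 0).
Proof.
elim: r F L => [|r IH] F L uF szF.
  case: F uF szF => [//|t0 F] uF _.
  exists (fun t => (t == t0)%:R); split.
    by move=> t; rewrite inE negb_or => /andP[/negbTE -> _].
  by split=> //; exists t0; rewrite ?inE ?eqxx ?oner_eq0.
have [f0|] := boolP (all (fun t => L r t == 0) F).
  have [y [ys [ynz yL]]] := IH F L uF (ltnW szF).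
  exists y; split=> //; split=> // j; rewrite ltnS leq_eqVlt => /orP[/eqP ->|]; last exact: yL.
  by rewrite big1_seq // => t /andP[_ tF]; move/allP: f0 => /(_ t tF)/eqP ->; rewrite mul0r.
case/allPn => s sF fs.
set f := L r.
pose F' := rem s F.
have uF' : uniq F' by exact: rem_uniq.
have szF' : size F = (size F').+1 by rewrite size_rem // prednK // (leq_ltn_trans _ szF).
pose L' j t := L j t - (L j s / f s) * f t.
have [y' [ys [[t1 t1F y1] yL]]] := IH F' L' uF' ltac:(by rewrite -ltnS -szF').
have memF' t : (t \in F') = (t != s) && (t \in F) by rewrite (mem_rem_uniq s uF).
pose c := - (\sum_(t <- F') f t * y' t) / f s.
exists (fun t => if t == s then c else y' t); split.
  move=> t tF; case: eqP => [ts|_]; first by rewrite ts sF in tF.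
  by apply: ys; rewrite memF' (negbTE tF) andbF.
have sumE g : \sum_(t <- F) g t * (if t == s then c else y' t) = g s * c + \sum_(t <- F') g t * y' t.
  rewrite (perm_big _ (perm_to_rem sF)) big_cons eqxx; congr (_ + _).
  by apply: eq_big_seq => t; rewrite memF' => /andP[/negbTE -> _].
split.
  exists t1; first by move: t1F; rewrite memF' => /andP[].
  by move: t1F; rewrite memF' => /andP[/negbTE -> _].
move=> j; rewrite ltnS leq_eqVlt => /orP[/eqP ->|jr].
  rewrite sumE /c -/f; field; exact: fs.
have := yL j jr; rewrite sumE.
have -> : \sum_(t <- F') L' j t * y' t = \sum_(t <- F') L j t * y' t - L j s / f s * \sum_(t <- F') f t * y' t.
  by rewrite mulr_sumr -sumrB; apply: eq_bigr => t _; rewrite /L' mulrBl mulrA.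
move=> H; apply: etrans H; rewrite /c; set S1 := \sum_(t <- F') f t * y' t; set S2 := \sum_(t <- F') L j t * y' t; field; exact: fs.
Qed.

Lemma sum_supp (R : nmodType) (s1 s2 : seq nat) (g : nat -> R) :
  uniq s1 -> uniq s2 -> {subset s1 <= s2} ->
  (forall t, t \in s2 -> t \notin s1 -> g t = 0) ->
  \sum_(t <- s2) g t = \sum_(t <- s1) g t.
Proof.
move=> u1 u2 sub g0.
rewrite (bigID (fun t => t \in s1)) /= [X in _ + X]big1_seq ?addr0; last first.
  by move=> t /andP[t1 t2]; apply: g0.
rewrite -big_filter; apply: perm_big; apply: uniq_perm; rewrite ?filter_uniq //.
by move=> t; rewrite mem_filter; case: (boolP (t \in s1)) => // /sub ->.
Qed.

Lemma seq_argmin (R : realDomainType) (s : seq nat) (f : nat -> R) :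
  s != [::] -> exists2 t0, t0 \in s & forall t, t \in s -> f t0 <= f t.
Proof.
elim: s => [//|a s IH] _.
case: (eqVneq s [::]) => [->|sn].
  by exists a; rewrite ?inE // => t; rewrite inE => /eqP ->.
have [t0 t0s H] := IH sn.
case: (leP (f a) (f t0)) => h.
  exists a; rewrite ?inE ?eqxx // => t; rewrite inE => /orP[/eqP -> //|/H]; exact: le_trans.
exists t0; rewrite ?inE ?t0s ?orbT // => t; rewrite inE => /orP[/eqP ->|/H //]; exact: ltW.
Qed.

Lemma count_strict (T : eqType) (P P' : pred T) (s : seq T) :
  {in s, forall t, P' t -> P t} -> (exists2 t, t \in s & P t && ~~ P' t) ->
  (count P' s < count P s)%N.
Proof.
elim: s => [_ [//]|a s IH] H [t].
have Hs : {in s, forall t, P' t -> P t} by move=> u us; apply: H; rewrite inE us orbT.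
have le : (count P' s <= count P s)%N.
  elim: s Hs {IH H} => [//|u s IHs] Hs /=; apply: leq_add; last by apply: IHs => v vs; apply: Hs; rewrite inE vs orbT.
  by case: (boolP (P' u)) => // /(Hs u (mem_head _ _)) ->.
rewrite inE /= => /orP[/eqP ->|ts] Pt.
  by case/andP: Pt => -> /negbTE ->; rewrite add0n add1n ltnS.
have := IH Hs (ex_intro2 _ _ t ts Pt).
case: (boolP (P' a)) => Pa; last by rewrite add0n => h; apply: (leq_trans h); apply: leq_addl.
by rewrite (H a (mem_head _ _) Pa) !add1n ltnS.
Qed.

Lemma nat_gap (R : realDomainType) (b N : nat) (z : R) :
  z + N%:R = b%:R -> 0 < z -> z < 1 -> False.
Proof.
move=> e z0 z1.
have ez : z = b%:R - N%:R by rewrite -e addrK.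
case: (leqP N b) => h.
  move: z0 z1; rewrite ez -natrB // ltr0n -[1]/(1%:R) ltr_nat; lia.
by move: z0; rewrite ez subr_gt0 ltr_nat ltnNge (ltnW h).
Qed.

Lemma count_mem_uniq (T : seq nat) (C : seq nat) : uniq T ->
  count (fun x => x \in T) C = (\sum_(t <- T) count_mem t C)%N.
Proof.
elim: T => [|a T IH] /=; first by rewrite big_nil; elim: C.
case/andP=> aT uT; rewrite big_cons -IH //.
rewrite -(count_predUI (pred1 a) (fun x => x \in T)).
have -> : count (predI (pred1 a) (fun x => x \in T)) C = 0%N.
  by apply/eqP; rewrite -leqn0 leqNgt -has_count; apply/hasPn => x _ /=; case: eqP => // ->; rewrite (negbTE aT).
by rewrite addn0; apply: eq_count => x; rewrite inE.
Qed.

Lemma uniq_flat (l : nat) (U : nat -> seq nat) :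
  (forall k, (k < l)%N -> uniq (U k)) ->
  (forall k k', (k < l)%N -> (k' < l)%N -> k <> k' -> forall x, x \in U k -> x \notin U k') ->
  uniq (flatten [seq U k | k <- iota 0 l]).
Proof.
elim: l => [|l IH] uU dis; first by [].
rewrite -addn1 iotaD map_cat flatten_cat cat_uniq /= cats0 add0n.
rewrite IH ?uU //; last first.
  by move=> k k' kl k'l; apply: dis; apply: ltn_trans (ltnSn _).
  by move=> k kl; apply: uU; apply: ltn_trans (ltnSn _).
rewrite andbT; apply/hasPn => t tl; apply/flatten_mapP => [[k]]; rewrite mem_iota add0n => /andP[_ kl] tk.
have kl' : k <> l by move=> e; move: kl; rewrite e ltnn.
by have := dis k l (ltn_trans kl (ltnSn _)) (ltnSn _) kl' t tk; rewrite tl.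
Qed.

Section Rounding.
Variable R : realFieldType.
Variables (l : nat) (U : nat -> seq nat) (m : nat) (w : nat -> nat -> R) (b : nat) (c theta delta : R).
Let Us := flatten [seq U k | k <- iota 0 l].
Hypotheses (uUs : uniq Us) (uU : forall k, (k < l)%N -> uniq (U k))
  (w0 : forall i t, 0 <= w i t) (wsum : forall t, \sum_(i < m) w i t <= delta)
  (th0 : 0 < theta) (dth : 4 * delta <= theta).

Definition fl (x : nat -> R) t : bool := (0 < x t) && (x t < 1).
Definition load x i := \sum_(t <- Us) w i t * x t.
Definition mass x i := \sum_(t <- Us) w i t * (fl x t)%:R.
Definition Qf x i := \sum_(t <- Us) w i t * (if fl x t then 1 else x t).
Definition Inv x := (forall t, t \in Us -> 0 <= x t <= 1) /\
  (forall k, (k < l)%N -> \sum_(t <- U k) x t = b%:R) /\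
  (forall i, (i < m)%N -> load x i <= c \/ Qf x i <= c + theta).

Lemma memUs k t : (k < l)%N -> t \in U k -> t \in Us.
Proof. by move=> kl tk; apply/flatten_mapP; exists k; rewrite // mem_iota. Qed.

Lemma no_single x k : Inv x -> (k < l)%N -> count (fl x) (U k) != 1%N.
Proof.
move=> [xb [xs _]] kl; apply/negP => /eqP c1.
have := xs k kl; rewrite (bigID (fl x)) /= -big_filter.
have : size [seq t <- U k | fl x t] = 1%N by rewrite size_filter.
case E : [seq t <- U k | fl x t] => [|t0 [|]] // _.
have : t0 \in [seq t <- U k | fl x t] by rewrite E mem_head.
rewrite mem_filter => /andP[/andP[z0 z1] t0k].
rewrite big_cons big_nil addr0.
have -> : \sum_(t <- U k | ~~ fl x t) x t = \sum_(t <- U k | ~~ fl x t) ((x t == 1) : nat)%:R.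
  rewrite big_seq_cond [RHS]big_seq_cond; apply: eq_bigr => t /andP[tk nf].
  have /andP[a0 a1] := xb t (memUs kl tk).
  move: nf; rewrite /fl negb_and -!leNgt.
  case/orP => h.
    have -> : x t = 0 by apply/le_anti; rewrite h a0.
    by rewrite eq_sym oner_eq0.
  have -> : x t = 1 by apply/le_anti; rewrite h a1.
  by rewrite eqxx.
by rewrite -natr_sum => e; apply: (nat_gap e).
Qed.

Lemma sum_const2 (s : seq nat) : (\sum_(i <- s) 2 = 2 * size s)%N.
Proof. by elim: s => [|a s IH]; rewrite ?big_nil ?big_cons ?IH //=; lia. Qed.

Lemma sum_constR (s : seq nat) (k : R) : \sum_(i <- s) k = (size s)%:R * k.
Proof. by elim: s => [|a s IH]; rewrite ?big_nil ?big_cons ?IH ?mul0r //= -add1n natrD mulrDl mul1r. Qed.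

Lemma sum_count (s : seq nat) (P : pred nat) : \sum_(t <- s) (P t)%:R = (count P s)%:R :> R.
Proof. by elim: s => [|a s IH]; rewrite ?big_nil ?big_cons ?IH //= natrD. Qed.

Lemma cnt_blocks x : count (fl x) Us = (\sum_(k <- iota 0 l) count (fl x) (U k))%N.
Proof. by rewrite /Us count_flatten sumnE !big_map. Qed.

Lemma claim1 x : Inv x -> (2 * size [seq k <- iota 0 l | has (fl x) (U k)] <= count (fl x) Us)%N.
Proof.
move=> Ix; rewrite cnt_blocks (bigID (fun k => has (fl x) (U k))) /=.
apply: leq_trans (leq_addr _ _); rewrite -big_filter -sum_const2 big_seq [X in (_ <= X)%N]big_seq.
apply: leq_sum => k; rewrite mem_filter mem_iota add0n => /andP[hk /andP[_ kl]].
have := no_single Ix kl; rewrite has_count in hk; lia.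
Qed.

Lemma mass_ge0 x i : 0 <= mass x i.
Proof. by apply: sumr_ge0 => t _; apply: mulr_ge0. Qed.

Lemma claim2 x : (4 * size [seq i <- iota 0 m | (theta < mass x i)%R] <= count (fl x) Us)%N.
Proof.
set A := [seq i <- iota 0 m | (theta < mass x i)%R].
have h1 : (size A)%:R * theta <= \sum_(i <- A) mass x i.
  rewrite -sum_constR big_seq [X in _ <= X]big_seq; apply: ler_sum => i.
  by rewrite mem_filter => /andP[/ltW].
have h2 : \sum_(i <- A) mass x i <= \sum_(i < m) mass x i.
  have -> : \sum_(i < m) mass x i = \sum_(i <- iota 0 m) mass x i.
    by rewrite -(big_mkord xpredT) /index_iota subn0.
  rewrite big_filter big_mkcond; apply: ler_sum => i _.
  by case: ifP => // _; apply: mass_ge0.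
have h3 : \sum_(i < m) mass x i <= delta * (count (fl x) Us)%:R.
  rewrite /mass exchange_big /= -sum_count mulr_sumr; apply: ler_sum => t _.
  rewrite -mulr_suml mulrC [X in _ <= X]mulrC; apply: ler_wpM2l; first by case: (fl x t).
  exact: wsum.
have : (size A)%:R * theta <= delta * (count (fl x) Us)%:R by apply: le_trans h3; apply: le_trans h2.
move=> h.
have : (4 * size A)%:R * theta <= (count (fl x) Us)%:R * theta.
  have d0 : 0 <= delta by apply: le_trans (wsum 0); apply: sumr_ge0.
  rewrite natrM; set a := (size A)%:R in h *; set n := (count _ _)%:R in h *; clear h1 h2 h3.
  have n0 : 0 <= n by rewrite /n ler0n.
  have := mulr_ge0 n0 (ltac:(by rewrite subr_ge0) : 0 <= theta - 4 * delta). nra.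
by rewrite ler_pM2r // ler_nat.
Qed.


Lemma step x : Inv x -> has (fl x) Us ->
  exists x', Inv x' /\ (count (fl x') Us < count (fl x) Us)%N.
Proof.
move=> Ix hx; case: (Ix) => xb [xs xr].
set F := [seq t <- Us | fl x t].
have uF : uniq F by exact: filter_uniq.
have szF : size F = count (fl x) Us by rewrite size_filter.
set FB := [seq k <- iota 0 l | has (fl x) (U k)].
set A := [seq i <- iota 0 m | (theta < mass x i)%R].
have c1 : (2 * size FB <= count (fl x) Us)%N := claim1 Ix.
 have c2 : (4 * size A <= count (fl x) Us)%N := claim2 x.
have cpos : (0 < count (fl x) Us)%N by rewrite -has_count.
have memF t : t \in Us -> (t \in F) = fl x t by move=> tU; rewrite mem_filter tU andbT.
have flF t : t \in F -> (0 < x t) && (x t < 1) by rewrite mem_filter => /andP[].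
have FUs t : t \in F -> t \in Us by rewrite mem_filter => /andP[].
have main : forall y : nat -> R, (forall t, t \notin F -> y t = 0) ->
    (forall k, k \in FB -> \sum_(t <- U k) y t = 0) ->
    (forall i, i \in A -> \sum_(t <- Us) w i t * y t = 0) ->
    (exists2 t, t \in F & 0 < y t) ->
    exists x', Inv x' /\ (count (fl x') Us < count (fl x) Us)%N.
  move=> y ys yB yA [t1 t1F yp].
  set G := [seq t <- F | y t != 0].
  have t1G : t1 \in G by rewrite mem_filter t1F andbT lt0r_neq0.
  have Gn : G != [::] by apply/eqP => E; rewrite E in t1G.
  pose r t := if 0 < y t then (1 - x t) / y t else - x t / y t.
  have [t0 t0G rmin] := seq_argmin r Gn.
  have t0F : t0 \in F by move: t0G; rewrite mem_filter => /andP[].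
  have yt0 : y t0 != 0 by move: t0G; rewrite mem_filter => /andP[].
  set s := r t0.
  have rE t : t \in G -> r t * y t = (if 0 < y t then 1 - x t else - x t).
    move=> tG; have yt : y t != 0 by move: tG; rewrite mem_filter => /andP[].
    by rewrite /r; case: ifP => _; rewrite mulfVK.
  have s0 : 0 <= s.
    have /andP[a0 a1] := flF _ t0F.
    rewrite /s /r; case: ifP => h; first by apply: divr_ge0; [rewrite subr_ge0 ltW|apply: ltW].
    have yn : y t0 < 0 by rewrite lt_neqAle yt0 leNgt h.
    by apply: mulr_le0; [rewrite oppr_le0 ltW|rewrite invr_le0 ltW].
  pose x' t := x t + s * y t.
  have x'out t : t \notin F -> x' t = x t by move=> tF; rewrite /x' ys // mulr0 addr0.
  have x'b t : t \in Us -> 0 <= x' t <= 1.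
    move=> tU; case: (boolP (t \in F)) => tF; last by rewrite x'out //; apply: xb.
    case: (eqVneq (y t) 0) => yt; first by rewrite /x' yt mulr0 addr0; apply: xb.
    have tG : t \in G by rewrite mem_filter tF andbT yt.
    have := rmin t tG; have := rE t tG; rewrite -/s.
    have /andP[a0 a1] := flF _ tF.
    rewrite /x'; case: ifP => yp'.
      move=> e sr; have : s * y t <= r t * y t by rewrite ler_pM2r.
      rewrite e => h; apply/andP; split; last by lra.
      by apply: addr_ge0; [apply: ltW|apply: mulr_ge0 => //; apply: ltW].
    have yn : y t < 0 by rewrite lt_neqAle yt leNgt yp'.
    move=> e sr; have : r t * y t <= s * y t by rewrite ler_nM2r.
    rewrite e => h; apply/andP; split; first by lra.
    have : s * y t <= 0 by apply: mulr_ge0_le0 => //; apply: ltW.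
    lra.
  have flx' t : t \in Us -> fl x' t -> fl x t.
    move=> tU; case: (boolP (t \in F)) => tF; first by rewrite -memF.
    by rewrite /fl x'out.
  have nfl0 : ~~ fl x' t0.
    rewrite /fl /x' -/s; have := rE t0 t0G; rewrite -/s => e; rewrite e.
    by case: ifP => _; rewrite ?subrKC ?addrN ?ltxx ?andbF.
  exists x'; split; last first.
    apply: count_strict; first by move=> t tU; apply: flx'.
    by exists t0; [apply: FUs|rewrite nfl0 andbT -memF //; apply: FUs].
  split; first exact: x'b.
  split.
    move=> k kl; rewrite /x' big_split /= xs // -mulr_sumr.
    case: (boolP (has (fl x) (U k))) => hk.
      by rewrite yB ?mulr0 ?addr0 // mem_filter hk mem_iota add0n kl.
    rewrite big_seq big1 ?mulr0 ?addr0 // => t tk; apply: ys.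
    rewrite memF; last exact: memUs tk.
    by apply/negP => ft; move/hasPn: hk => /(_ t tk); rewrite ft.
  have gle t : t \in Us -> (if fl x' t then 1 else x' t) <= (if fl x t then 1 else x t).
    move=> tU; case: (boolP (fl x t)) => h.
      by case: ifP => // _; have /andP[] := x'b t tU.
    have tF : t \notin F by rewrite memF.
    by move: h; rewrite /fl !x'out // => /negbTE ->.
  have Qmono i : Qf x' i <= Qf x i.
    rewrite /Qf big_seq [X in _ <= X]big_seq; apply: ler_sum => t tU.
    by apply: ler_wpM2l => //; apply: gle.
  have Qload i : Qf x i <= load x i + mass x i.
    rewrite /Qf /load /mass -big_split /= big_seq [X in _ <= X]big_seq; apply: ler_sum => t tU.
    rewrite -mulrDr; apply: ler_wpM2l => //.
    have /andP[a0 a1] := xb t tU.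
    by case: (fl x t); rewrite ?addr0 // lerDr.
  move=> i im; case: (xr i im) => h; last by right; apply: le_trans (Qmono i) h.
  case: (ltP theta (mass x i)) => hm.
    left; have iA : i \in A by rewrite mem_filter hm mem_iota add0n im.
    rewrite /load /x'; under eq_bigr => t _ do rewrite mulrDr.
    rewrite big_split /= -/(load x i).
    under eq_bigr => t _ do rewrite mulrCA.
    by rewrite -mulr_sumr yA // mulr0 addr0.
  right; apply: le_trans (Qmono i) _; apply: le_trans (Qload i) _.
  by apply: lerD.
pose L j t : R := if (j < size FB)%N then (t \in U (nth 0 FB j))%:R else w (nth 0 A (j - size FB)) t.
have [y [ys [[t1 t1F yt1] yL]]] := kernel_exists (r:=(size FB + size A)%N) L uF ltac:(rewrite szF; lia).
have yLU j : (j < size FB + size A)%N -> \sum_(t <- Us) L j t * y t = 0.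
  move=> jr; rewrite (@sum_supp _ F) ?yL //.
  by move=> t _ tF; rewrite ys // mulr0.
have yB k : k \in FB -> \sum_(t <- U k) y t = 0.
  move=> kFB; have := yLU (index k FB); rewrite /L index_mem kFB nth_index //.
  have : (index k FB < size FB)%N by rewrite index_mem.
  move=> ilt /(_ ltac:(lia)).
  move: kFB; rewrite mem_filter mem_iota add0n => /andP[_ kl].
  rewrite (@sum_supp _ (U k)) ?uU //; last by move=> t _ /negbTE ->; rewrite mul0r.
    by move=> H; apply: etrans H; rewrite big_seq [RHS]big_seq; apply: eq_bigr => t tk; rewrite tk mul1r.
  by move=> t; apply: memUs.
have yA i : i \in A -> \sum_(t <- Us) w i t * y t = 0.
  move=> iA; have := yLU (size FB + index i A)%N.
  have : (index i A < size A)%N by rewrite index_mem.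
  move=> ilt /(_ ltac:(lia)).
  rewrite /L ltnNge leq_addr /= addKn nth_index //.
case: (ltrgtP 0 (y t1)) => h.
- by apply: (main y) => //; exists t1.
- apply: (main (fun t => - y t)).
  + by move=> t tF; rewrite ys ?oppr0.
  + by move=> k kFB; rewrite sumrN yB ?oppr0.
  + by move=> i iA; under eq_bigr => t _ do rewrite mulrN; rewrite sumrN yA ?oppr0.
  + by exists t1; rewrite ?oppr_gt0.
- by rewrite -h eqxx in yt1.
Qed.

Lemma rounding_aux N x : (count (fl x) Us <= N)%N -> Inv x ->
  exists x', Inv x' /\ forall t, t \in Us -> ~~ fl x' t.
Proof.
elim: N x => [|N IH] x le Ix; (case: (boolP (has (fl x) Us)) => hx; last first);
  try by exists x; split=> // t tU; apply/negP => h; move/hasPn: hx => /(_ t tU); rewrite h.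
  by move: le; rewrite leqn0 => /eqP e; rewrite has_count e in hx.
have [x' [Ix' lt]] := step Ix hx.
by apply: (IH x') => //; rewrite -ltnS; apply: leq_trans lt le.
Qed.

Lemma rounding x : Inv x -> exists x', Inv x' /\ forall t, t \in Us -> ~~ fl x' t.
Proof. exact: rounding_aux (leqnn _). Qed.

End Rounding.

Unset Implicit Arguments. Set Strict Implicit.

Theorem mainTheorem5 (R : archiRealFieldType) (eta : R) (b : nat) :
  0 < eta <= 1 ->
  exists a0 : nat, forall a : nat, (a0 <= a)%N ->
  exists nu0 : R, 0 < nu0 /\ forall nu : R, 0 < nu <= nu0 ->
  exists mu0 : R, 0 < mu0 /\ forall mu : R, 0 < mu <= mu0 ->
  exists n0 : nat, forall n : nat, (n0 <= n)%N ->
  forall (m : nat) (C : nat -> seq nat),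
    (* (S1) *)
    (forall i, (i < m)%N -> nu * n%:R <= (size (C i))%:R /\ (size (C i) <= n)%N) ->
    (* (S2) *)
    (forall t : nat, (\sum_(i < m) mult t (C i))%:R <= mu * n%:R) ->
  forall (l : nat) (U : nat -> seq nat),
    (* U_1..U_l are sets (duplicate-free) of size a, pairwise disjoint *)
    (forall k, (k < l)%N -> uniq (U k) /\ size (U k) = a) ->
    (forall k k', (k < l)%N -> (k' < l)%N -> k <> k' ->
        forall x, x \in U k -> x \notin U k') ->
  exists T : seq nat,
    (* T is a subset of U = union of the U_k *)
    (forall x, x \in T -> exists2 k, (k < l)%N & x \in U k) /\
    (* (T1) |T ∩ U_k| >= b *)
    (forall k, (k < l)%N -> (b <= count (fun x => x \in T) (U k))%N) /\
    (* (T2) *)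
    (forall i, (i < m)%N ->
       (1 - eta) * (size (C i))%:R
         <= (size (msetminus (C i) (fun x => x \in T)))%:R).
Proof.
move=> /andP[e0 e1].
have e2 : 0 <= 2 / eta by apply: divr_ge0 => //; apply: ltW.
have hK := archi_boundP e2; set K := Num.Def.archi_bound (2 / eta) in hK.
have K0 : (0 < K)%N by rewrite -(ltr0n R); apply: le_lt_trans hK.
exists (b * K).+1 => a ha.
have a0 : (0 < a)%N by apply: leq_trans ha.
have ba : (b <= a)%N by apply: leq_trans (ltnW ha); apply: leq_pmulr.
have hb : 2 * b%:R <= eta * a%:R.
  have h1 : b%:R * (2 / eta) <= a%:R.
    apply: le_trans (_ : (b * K)%:R <= _); last by rewrite ler_nat ltnW.
    by rewrite natrM; apply: ler_wpM2l => //; apply: ltW.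
  have : b%:R * (2 / eta) * eta <= a%:R * eta by rewrite ler_pM2r.
  have -> : b%:R * (2 / eta) * eta = 2 * b%:R by field; rewrite gt_eqF.
  by rewrite [eta * _]mulrC.
exists 1; split=> // nu /andP[nu0 _].
exists (nu * eta / 8); split; first by apply: divr_gt0 => //; apply: mulr_gt0.
move=> mu /andP[mu0 mule].
exists 1%N => n n1 m C S1 S2 l U HU Hdis.
have nn0 : 0 < nu * n%:R by apply: mulr_gt0 => //; rewrite ltr0n.
have sz0 i : (i < m)%N -> 0 < (size (C i))%:R :> R.
  by move=> im; apply: lt_le_trans nn0 _; case: (S1 i im).
set Us := flatten [seq U k | k <- iota 0 l].
have uU k : (k < l)%N -> uniq (U k) by move=> kl; case: (HU k kl).
have uUs : uniq Us by apply: uniq_flat.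
pose w i t : R := (mult t (C i))%:R / (size (C i))%:R.
have w0 i t : 0 <= w i t by apply: divr_ge0.
have wsum t : \sum_(i < m) w i t <= mu / nu.
  apply: le_trans (_ : \sum_(i < m) (mult t (C i))%:R / (nu * n%:R) <= _).
    apply: ler_sum => i _; rewrite /w; apply: ler_wpM2l => //.
    have [h _] := S1 i (ltn_ord i).
    by rewrite lef_pV2 ?posrE // sz0.
  rewrite -mulr_suml -natr_sum.
  apply: le_trans (_ : mu * n%:R / (nu * n%:R) <= _).
    by apply: ler_wpM2r; [rewrite invr_ge0 ltW|apply: S2].
  have n0 : n%:R != 0 :> R by rewrite pnatr_eq0 -lt0n.
  by rewrite le_eqVlt; apply/orP; left; apply/eqP; field; rewrite n0 gt_eqF.
have th0 : 0 < eta / 2 by apply: divr_gt0.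
have dth : 4 * (mu / nu) <= eta / 2.
  rewrite mulrA ler_pdivrMr //.
  have : mu * 8 <= nu * eta.
    by move: mule; rewrite ler_pdivlMr.
  lra.
pose x0 (t : nat) : R := b%:R / a%:R.
have a0R : 0 < a%:R :> R by rewrite ltr0n.
have Ix0 : Inv l U m w b (eta / 2) (eta / 2) x0.
  split.
    move=> t _; rewrite /x0; apply/andP; split; first by apply: divr_ge0.
    by rewrite ler_pdivrMr // mul1r ler_nat.
  split.
    move=> k kl; rewrite sum_constR; case: (HU k kl) => _ ->; rewrite /x0.
    by field; rewrite gt_eqF.
  move=> i im; left; rewrite /load /x0.
  under eq_bigr => t _ do rewrite mulrC.
  rewrite -mulr_sumr.
  have hs : \sum_(t <- Us) w i t <= 1.
    rewrite /w -mulr_suml -natr_sum ler_pdivrMr ?sz0 // mul1r ler_nat.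
    by rewrite /mult -count_mem_uniq //; apply: count_size.
  apply: le_trans (_ : b%:R / a%:R * 1 <= _).
    by apply: ler_wpM2l => //; apply: divr_ge0.
  rewrite mulr1 ler_pdivrMr //; lra.
have [x [[xb [xs xr]] xnf]] := rounding uUs uU w0 wsum th0 dth Ix0.
have x01 t : t \in Us -> x t = ((x t == 1) : nat)%:R.
  move=> tU; have /andP[a1 a2] := xb t tU; have := xnf t tU.
  rewrite /fl negb_and -!leNgt; case/orP => h.
    have -> : x t = 0 by apply/le_anti; rewrite h a1.
    by rewrite eq_sym oner_eq0.
  have -> : x t = 1 by apply/le_anti; rewrite h a2.
  by rewrite eqxx.
have memUs k t : (k < l)%N -> t \in U k -> t \in Us.
  by move=> kl tk; apply/flatten_mapP; exists k; rewrite // mem_iota.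
exists [seq t <- Us | x t == 1]; split.
  move=> t; rewrite mem_filter => /andP[_ /flatten_mapP [k]].
  by rewrite mem_iota add0n => /andP[_ kl] tk; exists k.
split.
  move=> k kl.
  have e : count (fun t => t \in [seq t <- Us | x t == 1]) (U k) = count (fun t => x t == 1) (U k).
    by apply: eq_in_count => t tk; rewrite mem_filter (memUs k t kl tk) andbT.
  rewrite e; suff -> : count (fun t => x t == 1) (U k) = b by [].
  apply/eqP; rewrite -(eqr_nat R) -sum_count -(xs k kl); apply/eqP.
  by rewrite big_seq [RHS]big_seq; apply: eq_bigr => t tk; rewrite -x01 //; apply: memUs tk.
move=> i im.
set T := [seq t <- Us | x t == 1].
have uT : uniq T by apply: filter_uniq.
have hload : load l U w x i <= eta.
  case: (xr i im) => h; first by apply: le_trans h _; lra.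
  have <- : Qf l U w x i = load l U w x i.
    rewrite /Qf /load big_seq [RHS]big_seq; apply: eq_bigr => t tU.
    by rewrite ifN // xnf.
  by apply: le_trans h _; lra.
have hcnt : (count (fun t => t \in T) (C i))%:R = (size (C i))%:R * load l U w x i.
  rewrite count_mem_uniq // big_filter natr_sum big_mkcond /load mulr_sumr.
  rewrite big_seq [RHS]big_seq; apply: eq_bigr => t tU.
  rewrite /w [in RHS]x01 // mulrA mulrCA divff; last by rewrite gt_eqF ?sz0.
  rewrite mulr1 /mult.
  by case: (x t == 1); rewrite ?mulr1 ?mulr0.
have hsz := count_predC (fun t => t \in T) (C i).
rewrite /msetminus size_filter.
have -> : count (fun x => ~~ (x \in T)) (C i) = (size (C i) - count (fun t => t \in T) (C i))%N.
  by rewrite -hsz addKn.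
rewrite natrB; last by rewrite -hsz leq_addr.
rewrite hcnt.
have := sz0 i im; set S := (size (C i))%:R; set Ld := load _ _ _ _ _ in hload *.
move=> S0; nra.
Qed.
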